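(* Let $\mathcal{H}_{\rm kin}=\mathcal{H}_R\otimes\mathcal{H}_S$ be a local QRF-system partition for an $[[n,k]]$ Pauli stabilizer code, with $\mathcal{H}_R\simeq(\mathbb{C}^2)^{\otimes(n-k)}$ consisting of $n-k$ physical qubits, such that $G=\mathbb{Z}_2^{\times(n-k)}$ is represented by the code's stabilizers as $g\mapsto U^g_R\otimes U^g_S$, where $g\mapsto U^g_R$ is faithful (possibly projective), $g\mapsto U^g_S$ is non-trivial, and the orientation states satisfy $\braket{g}{h}_R=\delta_{g,h}$ ($R$ ideal). Let $\mathcal{E}=\{E_1,\ldots,E_m\}$ be a set of correctable Pauli errors. Then for every $\ket{\bar\psi}=T_R^\dagger(\ket1_R\otimes\ket\psi_S)\in\mathcal{H}_{\rm pn}$, $$T_RE_i\ket{\bar\psi}=\ket{w(E_i)}_R\otimes L_S(E_i)\ket\psi_S,$$ for some collection of orthonormal states $\ket{w(E_i)}_R\in\mathcal{H}_R$ and unitary operators $L_S(E_i)$ on $\mathcal{H}_S$ (independent of $\psi$).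
   Context: An $[[n,k]]$ Pauli stabilizer code: $\mathcal{H}_{\rm kin}=(\mathbb{C}^2)^{\otimes n}$, $\mathcal{P}_n$ the $n$-qubit Pauli group, $G=\mathbb{Z}_2^{\times(n-k)}$, $g\mapsto U^g\in\mathcal{P}_n$ a faithful unitary representation with $-I\notin U(G)$; $\mathcal{H}_{\rm pn}$ is the common $+1$ eigenspace, $\Pi_{\rm pn}=\frac1{|G|}\sum_gU^g$. Local partition: $R$ is a set of $n-k$ qubits, $S$ the remaining $k$ qubits, $U^g_R$ is the Pauli string of $U^g$ on the qubits of $R$ with prefactor removed and $U^g_S$ the remaining part (carrying the sign), so $U^g=U^g_R\otimes U^g_S$; $U^g_RU^h_R=c(g,h)U^{gh}_R$ with phases $c(g,h)$. The orientation states are $\ket g_R:=U^g_R\ket e_R$ for a seed state $\ket e_R$, forming an orthonormal basis of $\mathcal{H}_R$. Define $\ket1_R=|G|^{-1/2}\sum_g\ket g_R$ and the disentangler $T_R=\sum_{g\in G}\ket g\!\bra g_R\otimes(U^g_S)^\dagger$. A set $\{E_i\}$ is correctable if $\Pi_{\rm pn}E_i^\dagger E_j\Pi_{\rm pn}=C_{ij}\Pi_{\rm pn}$ with $(C_{ij})$ Hermitian. *)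

(* Defs.v *)
From HB Require Import structures.
From mathcomp Require Import all_boot all_order all_algebra algC.
Set Implicit Arguments. Unset Strict Implicit. Unset Printing Implicit Defensive.
Import Order.TTheory GRing.Theory Num.Theory.
Local Open Scope ring_scope.

(* vectors of the Hilbert space C^T and operators on it (matrices indexed by T) *)
Notation vect T := {ffun T -> algC}.
Notation oper T := {ffun (T * T)%type -> algC}.

Definition app (T : finType) (A : oper T) (v : vect T) : vect T :=
  [ffun y => \sum_x A (y, x) * v x].
Definition mulo (T : finType) (A B : oper T) : oper T :=
  [ffun p => \sum_z A (p.1, z) * B (z, p.2)].
Definition adjo (T : finType) (A : oper T) : oper T :=
  [ffun p => (A (p.2, p.1))^*].
Definition ido (T : finType) : oper T := [ffun p => (p.1 == p.2)%:R].
Definition oppo (T : finType) (A : oper T) : oper T := [ffun p => - A p].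
Definition scaleo (T : finType) (c : algC) (A : oper T) : oper T :=
  [ffun p => c * A p].
Definition dotv (T : finType) (u v : vect T) : algC := \sum_x (u x)^* * v x.
Definition outer (T : finType) (u v : vect T) : oper T :=
  [ffun p => u p.1 * (v p.2)^*].
Definition tensv (A B : finType) (u : vect A) (v : vect B) : vect (A * B) :=
  [ffun p => u p.1 * v p.2].
Definition tenso (A B : finType) (X : oper A) (Y : oper B) : oper (A * B) :=
  [ffun p => X (p.1.1, p.2.1) * Y (p.1.2, p.2.2)].
Definition unitary (T : finType) (U : oper T) : Prop := mulo (adjo U) U = ido T.

Notation qR R := {i | i \in R}.
Notation qS R := {i | i \notin R}.
(* computational basis of H_R = (C^2)^{(x) R} and of H_S = (C^2)^{(x) S} *)
Notation confR R := {ffun qR R -> bool}.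
Notation confS R := {ffun qS R -> bool}.
(* computational basis of H_kin = (C^2)^{(x) n} = H_R (x) H_S *)
Notation kin R := (confR R * confS R)%type.

Definition bitAt (n : nat) (R : {set 'I_n}) (x : kin R) (i : 'I_n) : bool :=
  if (insub i : option (qR R)) is Some j then x.1 j
  else if (insub i : option (qS R)) is Some j then x.2 j else false.

(* single-qubit Pauli letter encoded by (x-bit, z-bit):
   (0,0) = I, (1,0) = X, (0,1) = Z, (1,1) = Y = i X Z.
   sigma l y x = <y| sigma_l |x>. *)
Definition sigma (l : bool * bool) (y x : bool) : algC :=
  match l with
  | (false, false) => (y == x)%:R
  | (true, false) => (y == ~~ x)%:R
  | (false, true) => (y == x)%:R * (-1) ^+ x
  | (true, true) => (y == ~~ x)%:R * 'i * (-1) ^+ x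
  end.

(* an element of the n-qubit Pauli group P_n: prefactor i^c and a Pauli string *)
Definition pauli (n : nat) := ('I_4 * {ffun 'I_n -> bool * bool})%type.

Definition pauli_op (n : nat) (R : {set 'I_n}) (P : pauli n) : oper (kin R) :=
  [ffun p : kin R * kin R => 'i ^+ P.1 *
     \prod_(i < n) sigma (P.2 i) (bitAt p.1 i) (bitAt p.2 i)].
(* U_R : the Pauli string on the qubits of R, prefactor removed *)
Definition pauliR (n : nat) (R : {set 'I_n}) (P : pauli n) : oper (confR R) :=
  [ffun p : confR R * confR R => \prod_(j : qR R) sigma (P.2 (val j)) (p.1 j) (p.2 j)].
(* U_S : the remaining part, carrying the prefactor *)
Definition pauliS (n : nat) (R : {set 'I_n}) (P : pauli n) : oper (confS R) :=
  [ffun p : confS R * confS R => 'i ^+ P.1 *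
     \prod_(j : qS R) sigma (P.2 (val j)) (p.1 j) (p.2 j)].

Definition grp (d : nat) := {ffun 'I_d -> bool}.
Definition gmul (d : nat) (g h : grp d) : grp d := [ffun i => g i (+) h i].

Section Code.
Variables (n d : nat) (R : {set 'I_n}) (U : grp d -> pauli n) (e : vect (confR R)).

Definition pauli_stab_rep : Prop :=
  [/\ forall g h, pauli_op R (U (gmul g h)) = mulo (pauli_op R (U g)) (pauli_op R (U h)),
      injective (fun g => pauli_op R (U g)) &
      forall g, pauli_op R (U g) <> oppo (ido (kin R))].

Definition Pi_pn : oper (kin R) :=
  [ffun p => (#|{: grp d}|%:R)^-1 * \sum_g pauli_op R (U g) p].

Definition orient (g : grp d) : vect (confR R) := app (pauliR R (U g)) e.

Definition oneR : vect (confR R) :=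
  [ffun a => (sqrtC (#|{: grp d}|%:R))^-1 * \sum_g orient g a].

Definition TR : oper (kin R) :=
  [ffun p => \sum_g tenso (outer (orient g) (orient g)) (adjo (pauliS R (U g))) p].

(* correctable set of errors (Knill-Laflamme with Hermitian C) *)
Definition correctable (m : nat) (E : 'I_m -> pauli n) : Prop :=
  exists C : 'I_m -> 'I_m -> algC,
    (forall i j, C j i = (C i j)^*) /\
    forall i j, mulo Pi_pn (mulo (mulo (adjo (pauli_op R (E i))) (pauli_op R (E j))) Pi_pn)
                = scaleo (C i j) Pi_pn.
End Code.

Arguments pauli_stab_rep {n d} R U.
Arguments Pi_pn {n d} R U.
Arguments orient {n d} R U e g.
Arguments oneR {n d} R U e.
Arguments TR {n d} R U e.
Arguments correctable {n d} R U {m} E.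
Arguments pauli_op {n} R P.
Arguments pauliR {n} R P.
Arguments pauliS {n} R P.

(* Main.v *)
Set Warnings "-notation-overridden,-ambiguous-paths".
Require Import Defs.
From HB Require Import structures.
From mathcomp Require Import all_boot all_order all_algebra algC.
From mathcomp Require Import ring.
Import Order.TTheory GRing.Theory Num.Theory.
Local Open Scope ring_scope.
Set Implicit Arguments. Unset Strict Implicit. Unset Printing Implicit Defensive.

Section Gen.
Variable T : finType.
Implicit Types (A B C : oper T) (u v : vect T).

Definition mono (pi : T -> T) (f : T -> algC) : oper T :=
  [ffun q => (q.1 == pi q.2)%:R * f q.2].

Lemma mulo_mono pi f sg g :
  mulo (mono pi f) (mono sg g) = mono (pi \o sg) (fun x => f (sg x) * g x).
Proof.
apply/ffunP=> [[y x]]; rewrite !ffunE /=.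
rewrite (bigD1 (sg x)) //= big1 => [|z Hz]; last first.
  by rewrite !ffunE /= (negbTE Hz) mul0r mulr0.
rewrite !ffunE /= eqxx mulr1n addr0; ring.
Qed.

Lemma adjo_mono pi f : involutive pi ->
  adjo (mono pi f) = mono pi (fun x => (f (pi x))^*).
Proof.
move=> Hi; apply/ffunP=> [[y x]]; rewrite !ffunE /=.
have [->|H] := eqVneq x (pi y).
  by rewrite Hi eqxx rmorphM /= conjC_nat.
have -> : (y == pi x) = false.
  by apply/negbTE; apply: contra H => /eqP ->; rewrite Hi.
by rewrite rmorphM /= conjC_nat !mul0r.
Qed.

Lemma mono_ext pi sg f g : pi =1 sg -> f =1 g -> mono pi f = mono sg g.
Proof. by move=> H1 H2; apply/ffunP=> q; rewrite !ffunE H1 H2. Qed.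

Lemma ido_mono : ido T = mono id (fun _ => 1).
Proof. by apply/ffunP=> q; rewrite !ffunE mulr1. Qed.

Lemma scale_mono c pi f : scaleo c (mono pi f) = mono pi (fun x => c * f x).
Proof. by apply/ffunP=> q; rewrite !ffunE; ring. Qed.

Lemma unitary_mono pi f : involutive pi -> (forall x, (f x)^* * f x = 1) ->
  unitary (mono pi f).
Proof.
move=> Hi Hf; rewrite /unitary adjo_mono // mulo_mono ido_mono.
by apply: mono_ext => x //=; rewrite Hi.
Qed.

End Gen.

Definition ph (l : bool * bool) (x : bool) : algC :=
  match l with
  | (_, false) => 1
  | (false, true) => (-1) ^+ x
  | (true, true) => 'i * (-1) ^+ x
  end.

Lemma sigma_ph l y x : sigma l y x = (y == x (+) l.1)%:R * ph l x.
Proof. by case: l => [[] []] /=; rewrite ?addbT ?addbF ?mulr1 ?mulrA. Qed.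

Lemma hi : 'i * 'i = -1 :> algC. Proof. by rewrite -expr2 sqrCi. Qed.

Lemma ph_unit l x : (ph l x)^* * ph l x = 1.
Proof.
case: l => [[] []]; case: x => /=; rewrite ?rmorph1 ?mulr1 ?expr0 ?expr1 //;
  rewrite ?rmorphM /= ?conjCi ?rmorph1 ?rmorphN1;
  try (transitivity (- ('i * 'i) :> algC); [by ring | by rewrite hi opprK]).
by rewrite mulrN1 opprK.
Qed.

Lemma ph_flip l x b : ph l (x (+) b) = ph l x * (-1) ^+ (l.2 && b).
Proof.
case: l => [[] []]; case: x; case: b => /=; rewrite ?expr0 ?expr1 ?mulr1 //;
  ring.
Qed.

Section Str.
Variable I : finType.
Definition flip (a : I -> bool) (x : {ffun I -> bool}) : {ffun I -> bool} :=
  [ffun j => x j (+) a j].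
Lemma flipK a : involutive (flip a).
Proof. by move=> x; apply/ffunP=> j; rewrite !ffunE addbK. Qed.
Lemma flipC a b x : flip a (flip b x) = flip b (flip a x).
Proof. by apply/ffunP=> j; rewrite !ffunE addbAC. Qed.

Definition Pstr (p : I -> bool * bool) : oper {ffun I -> bool} :=
  [ffun q : {ffun I -> bool} * {ffun I -> bool} => \prod_j sigma (p j) (q.1 j) (q.2 j)].
Definition fP (p : I -> bool * bool) (x : {ffun I -> bool}) := \prod_j ph (p j) (x j).
Definition xb (p : I -> bool * bool) j := (p j).1.
Definition sgnS (p : I -> bool * bool) (b : I -> bool) : algC :=
  \prod_j (-1) ^+ ((p j).2 && b j).

Lemma prod_nat_bool (F : I -> bool) : \prod_j (F j)%:R = [forall j, F j]%:R :> algC.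
Proof.
case: (boolP [forall j, F j]) => [/forallP H | /forallPn [j Hj]].
  by rewrite big1 // => j _; rewrite H.
by rewrite (bigD1 j) //= (negbTE Hj) mul0r.
Qed.

Lemma Pstr_mono p : Pstr p = mono (flip (xb p)) (fP p).
Proof.
apply/ffunP=> [[y x]]; rewrite !ffunE /=.
under eq_bigr do rewrite sigma_ph.
rewrite big_split /= prod_nat_bool; congr ((nat_of_bool _)%:R * _).
apply/idP/eqP => [/forallP H | ->]; last by apply/forallP=> j; rewrite ffunE.
by apply/ffunP=> j; rewrite ffunE; apply/eqP.
Qed.

Lemma fP_unit p x : (fP p x)^* * fP p x = 1.
Proof.
rewrite /fP rmorph_prod -big_split /=; apply: big1 => j _; exact: ph_unit.
Qed.

Lemma Pstr_unitary p : unitary (Pstr p).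
Proof. rewrite Pstr_mono; apply: unitary_mono; [exact: flipK | exact: fP_unit]. Qed.

Lemma fP_flip p b x : fP p (flip b x) = fP p x * sgnS p b.
Proof.
rewrite /fP /sgnS -big_split /=; apply: eq_bigr => j _.
by rewrite ffunE ph_flip.
Qed.

Lemma sgn_sq p b : sgnS p b ^+ 2 = 1.
Proof. by rewrite /sgnS -prodrXl; apply: big1 => j _; rewrite sqrr_sign. Qed.

Lemma Pstr_comm p q :
  mulo (Pstr p) (Pstr q) = scaleo (sgnS p (xb q) * sgnS q (xb p)) (mulo (Pstr q) (Pstr p)).
Proof.
rewrite !Pstr_mono !mulo_mono scale_mono; apply: mono_ext => x /=.
  by rewrite flipC.
rewrite !fP_flip; have := sgn_sq q (xb p); set s := sgnS q _ => H.
transitivity (fP p x * sgnS p (xb q) * fP q x * s ^+ 2); first by rewrite H; ring.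
ring.
Qed.
End Str.

Section Split.
Variables (n : nat) (R : {set 'I_n}).

Lemma bitAtR (x : kin R) (j : qR R) : bitAt x (val j) = x.1 j.
Proof. by rewrite /bitAt valK. Qed.

Lemma bitAtS (x : kin R) (j : qS R) : bitAt x (val j) = x.2 j.
Proof.
rewrite /bitAt insubN; last exact: (valP j).
by rewrite valK.
Qed.

Lemma pauli_split (P : pauli n) :
  pauli_op R P = tenso (pauliR R P) (pauliS R P).
Proof.
apply/ffunP=> [[x y]]; rewrite !ffunE /=.
rewrite (bigID (fun i => i \in R)) /=.
rewrite (big_sub (mem R) (fun i => sigma (P.2 i) (bitAt x i) (bitAt y i))).
rewrite (big_sub [pred i | i \notin R] (fun i => sigma (P.2 i) (bitAt x i) (bitAt y i))).
rewrite mulrCA; congr (_ * (_ * _)); apply: eq_bigr => j _.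
  by rewrite /bitAt !valK.
rewrite /bitAt insubN ?valK //; exact: (valP j).
Qed.

Lemma pauliR_str (P : pauli n) : pauliR R P = Pstr (fun j : qR R => P.2 (val j)).
Proof. by apply/ffunP=> q; rewrite !ffunE. Qed.

Lemma pauliS_str (P : pauli n) :
  pauliS R P = scaleo ('i ^+ P.1) (Pstr (fun j : qS R => P.2 (val j))).
Proof. by apply/ffunP=> q; rewrite !ffunE. Qed.
End Split.

Section Ops.
Variable T : finType.
Implicit Types (A B C : oper T) (u v : vect T).

Lemma muloA A B C : mulo (mulo A B) C = mulo A (mulo B C).
Proof.
apply/ffunP=> p; rewrite !ffunE /=.
under eq_bigr do rewrite ffunE big_distrl /=.
rewrite exchange_big; apply: eq_bigr => w _.
rewrite ffunE big_distrr; apply: eq_bigr => z _ /=; by rewrite mulrA.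
Qed.

Lemma app_mulo A B v : app (mulo A B) v = app A (app B v).
Proof.
apply/ffunP=> y; rewrite !ffunE.
under eq_bigr do rewrite ffunE big_distrl /=.
rewrite exchange_big; apply: eq_bigr => w _.
rewrite ffunE big_distrr; apply: eq_bigr => z _ /=; by rewrite mulrA.
Qed.

Lemma mulo_scalel c A B : mulo (scaleo c A) B = scaleo c (mulo A B).
Proof.
apply/ffunP=> p; rewrite !ffunE big_distrr; apply: eq_bigr => z _.
by rewrite ffunE /= mulrA.
Qed.

Lemma mulo_scaler c A B : mulo A (scaleo c B) = scaleo c (mulo A B).
Proof.
apply/ffunP=> p; rewrite !ffunE big_distrr; apply: eq_bigr => z _.
by rewrite ffunE /= mulrCA.
Qed.

Lemma scaleoA c d A : scaleo c (scaleo d A) = scaleo (c * d) A.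
Proof. by apply/ffunP=> p; rewrite !ffunE mulrA. Qed.

Lemma mulo1 A : mulo A (ido T) = A.
Proof.
apply/ffunP=> [[x y]]; rewrite !ffunE /= (bigD1 y) //= big1 => [|z Hz].
  by rewrite ffunE /= eqxx mulr1 addr0.
by rewrite ffunE /= (negbTE Hz) mulr0.
Qed.

Lemma mul1o A : mulo (ido T) A = A.
Proof.
apply/ffunP=> [[x y]]; rewrite !ffunE /= (bigD1 x) //= big1 => [|z Hz].
  by rewrite ffunE /= eqxx mul1r addr0.
by rewrite ffunE /= eq_sym (negbTE Hz) mul0r.
Qed.

Lemma adjoK A : adjo (adjo A) = A.
Proof. by apply/ffunP=> p; rewrite !ffunE conjCK; case: p. Qed.

Lemma dotv_adj A u v : dotv (app A u) v = dotv u (app (adjo A) v).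
Proof.
rewrite /dotv.
under eq_bigr do rewrite ffunE rmorph_sum big_distrl /=.
rewrite exchange_big; apply: eq_bigr => x _.
rewrite ffunE big_distrr; apply: eq_bigr => y _ /=.
by rewrite ffunE rmorphM /=; ring.
Qed.

Lemma dotv_unitary A u v : unitary A -> dotv (app A u) (app A v) = dotv u v.
Proof.
move=> HA; rewrite dotv_adj -app_mulo HA; congr (dotv u _).
apply/ffunP=> y; rewrite !ffunE (bigD1 y) //= big1 => [|z Hz].
  by rewrite ffunE /= eqxx mul1r addr0.
by rewrite ffunE /= eq_sym (negbTE Hz) mul0r.
Qed.

Lemma unitary_nz (x0 : T) (X : oper T) : unitary X -> exists p, X p != 0.
Proof.
move=> HX; case: (pickP (fun p => X p != 0)) => [p Hp | H]; first by exists p.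
have := congr1 (fun F : oper T => F (x0, x0)) HX; rewrite !ffunE /= eqxx big1 //.
  by move/eqP; rewrite eq_sym oner_eq0.
by move=> z _; have := H (z, x0); move=> /negbFE /eqP ->; rewrite mulr0.
Qed.

Lemma scaleo_inj (x0 : T) (X : oper T) c d : unitary X -> scaleo c X = scaleo d X -> c = d.
Proof.
move=> /(unitary_nz x0) [p Hp] /(congr1 (fun F : oper T => F p)); rewrite !ffunE.
by move/(mulIf Hp).
Qed.

Definition tomx A : 'M[algC]_#|T| := \matrix_(i, j) A (enum_val i, enum_val j).

Lemma tomx_mul A B : tomx (mulo A B) = tomx A *m tomx B.
Proof.
apply/matrixP=> i j; rewrite !mxE ffunE /=.
rewrite (reindex (fun i : 'I_#|T| => enum_val i)) /=; last first.
  by exists enum_rank => x _; [rewrite enum_valK | rewrite enum_rankK].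
by apply: eq_bigr => k _; rewrite !mxE.
Qed.

Lemma tomx1 : tomx (ido T) = 1%:M.
Proof.
apply/matrixP=> i j; rewrite !mxE ffunE /=.
by rewrite (inj_eq (can_inj (@enum_valK T))).
Qed.

Lemma tomx_inj : injective tomx.
Proof.
move=> A B H; apply/ffunP=> [[x y]].
have := congr1 (fun M : 'M[algC]_#|T| => M (enum_rank x) (enum_rank y)) H; rewrite !mxE.
by rewrite !enum_rankK.
Qed.

Lemma mulo_sym A B : mulo A B = ido T -> mulo B A = ido T.
Proof.
move=> H; apply: tomx_inj; rewrite tomx_mul tomx1; apply: mulmx1C.
by rewrite -tomx_mul H tomx1.
Qed.

End Ops.

Lemma complete (G T : finType) (o : G -> vect T) (hc : #|T| = #|G|)
  (hon : forall g h, dotv (o g) (o h) = (g == h)%:R) :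
  forall a b, \sum_g (o g a)^* * o g b = (a == b)%:R.
Proof.
pose phi (x : T) : G := enum_val (cast_ord hc (enum_rank x)).
pose psi (y : G) : T := enum_val (cast_ord (esym hc) (enum_rank y)).
have K1 : cancel phi psi by move=> x; rewrite /phi /psi enum_valK cast_ordK enum_rankK.
have K2 : cancel psi phi by move=> x; rewrite /phi /psi enum_valK cast_ordKV enum_rankK.
pose O : oper T := [ffun q : T * T => o (phi q.1) q.2].
have H1 : mulo O (adjo O) = ido T.
  apply/ffunP=> [[x y]]; rewrite !ffunE /=.
  transitivity (dotv (o (phi y)) (o (phi x))).
    by rewrite /dotv; apply: eq_bigr => z _; rewrite !ffunE /= mulrC.
  by rewrite hon (inj_eq (can_inj K1)) eq_sym.
move=> a b; have := congr1 (fun F : oper T => F (a, b)) (mulo_sym H1).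
rewrite !ffunE /= => <-.
rewrite (reindex phi) /=; last by exists psi => x _; [rewrite K1 | rewrite K2].
by apply: eq_bigr => z _; rewrite !ffunE.
Qed.

Lemma sum_pair (X Y : finType) (F : X * Y -> algC) :
  \sum_p F p = \sum_a \sum_b F (a, b).
Proof. by rewrite pair_bigA; apply: eq_bigr => [[]]. Qed.

Section Tens.
Variables X Y : finType.

Lemma app_tens (P : oper X) (Q : oper Y) u v :
  app (tenso P Q) (tensv u v) = tensv (app P u) (app Q v).
Proof.
apply/ffunP=> [[a b]]; rewrite !ffunE /= sum_pair big_distrl /=.
apply: eq_bigr => x _; rewrite big_distrr; apply: eq_bigr => y _ /=.
by rewrite !ffunE /=; ring.
Qed.

Lemma mulo_tens (P P' : oper X) (Q Q' : oper Y) :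
  mulo (tenso P Q) (tenso P' Q') = tenso (mulo P P') (mulo Q Q').
Proof.
apply/ffunP=> [[[a b] [c d]]]; rewrite !ffunE /= sum_pair big_distrl /=.
apply: eq_bigr => x _; rewrite big_distrr; apply: eq_bigr => y _ /=.
by rewrite !ffunE /=; ring.
Qed.

Lemma adjo_tens (P : oper X) (Q : oper Y) : adjo (tenso P Q) = tenso (adjo P) (adjo Q).
Proof. by apply/ffunP=> [[[a b] [c d]]]; rewrite !ffunE /= rmorphM. Qed.

Lemma tens_id : tenso (ido X) (ido Y) = ido (X * Y)%type.
Proof.
apply/ffunP=> [[[a b] [c d]]]; rewrite !ffunE /= xpair_eqE.
by case: (a == c); case: (b == d); rewrite /= ?mulr1 ?mul0r ?mulr0.
Qed.

Lemma unitary_tens (P : oper X) (Q : oper Y) : unitary P -> unitary Q -> unitary (tenso P Q).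
Proof. by move=> HP HQ; rewrite /unitary adjo_tens mulo_tens HP HQ tens_id. Qed.

Lemma tens_scale c c' (P : oper X) (Q : oper Y) :
  tenso (scaleo c P) (scaleo c' Q) = scaleo (c * c') (tenso P Q).
Proof. by apply/ffunP=> p; rewrite !ffunE; ring. Qed.

Lemma dotv_tens (u u' : vect X) (v v' : vect Y) :
  dotv (tensv u v) (tensv u' v') = dotv u u' * dotv v v'.
Proof.
rewrite /dotv sum_pair big_distrl /=; apply: eq_bigr => a _.
rewrite big_distrr; apply: eq_bigr => b _ /=; rewrite !ffunE rmorphM /=; ring.
Qed.
End Tens.

Lemma adjo_scale (T : finType) c (P : oper T) : adjo (scaleo c P) = scaleo c^* (adjo P).
Proof. by apply/ffunP=> p; rewrite !ffunE rmorphM. Qed.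

Lemma unitary_scale (T : finType) c (P : oper T) : c^* * c = 1 -> unitary P -> unitary (scaleo c P).
Proof.
move=> Hc HP; rewrite /unitary adjo_scale mulo_scalel mulo_scaler scaleoA HP.
by apply/ffunP=> p; rewrite !ffunE /= Hc mul1r.
Qed.

Lemma unitary_mulo (T : finType) (P Q : oper T) : unitary P -> unitary Q -> unitary (mulo P Q).
Proof.
move=> HP HQ; rewrite /unitary.
have -> : adjo (mulo P Q) = mulo (adjo Q) (adjo P).
  apply/ffunP=> [[a b]]; rewrite !ffunE /= rmorph_sum; apply: eq_bigr => z _.
  by rewrite !ffunE /= rmorphM mulrC.
by rewrite muloA -(muloA (adjo P)) HP mul1o HQ.
Qed.

Lemma ipow_unit (c : nat) : ('i ^+ c)^* * 'i ^+ c = 1 :> algC.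
Proof. by rewrite rmorphXn /= conjCi -exprMn mulNr hi opprK expr1n. Qed.

Lemma tens_comm (X Y : finType) (A A' : oper X) (B B' : oper Y) a b :
  mulo A A' = scaleo a (mulo A' A) -> mulo B B' = scaleo b (mulo B' B) ->
  mulo (tenso A B) (tenso A' B') = scaleo (a * b) (mulo (tenso A' B') (tenso A B)).
Proof. by move=> HA HB; rewrite !mulo_tens HA HB tens_scale. Qed.

Lemma scale_comm (T : finType) (A A' : oper T) c c' l :
  mulo A A' = scaleo l (mulo A' A) ->
  mulo (scaleo c A) (scaleo c' A') = scaleo l (mulo (scaleo c' A') (scaleo c A)).
Proof.
move=> H; rewrite !mulo_scalel !mulo_scaler !scaleoA H scaleoA.
by congr scaleo; ring.
Qed.

Section Pauli.
Variables (n : nat) (R : {set 'I_n}).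

Lemma pauliR_unitary P : unitary (pauliR R P).
Proof. rewrite pauliR_str; exact: Pstr_unitary. Qed.

Lemma pauliS_unitary P : unitary (pauliS R P).
Proof. rewrite pauliS_str; apply: unitary_scale; [exact: ipow_unit | exact: Pstr_unitary]. Qed.

Lemma pauli_unitary P : unitary (pauli_op R P).
Proof. rewrite pauli_split; apply: unitary_tens; [exact: pauliR_unitary | exact: pauliS_unitary]. Qed.

Definition lamI (I : finType) (p q : I -> bool * bool) := sgnS p (xb q) * sgnS q (xb p).
Definition lam (P Q : pauli n) : algC :=
  lamI (fun j : qR R => P.2 (val j)) (fun j : qR R => Q.2 (val j)) *
  lamI (fun j : qS R => P.2 (val j)) (fun j : qS R => Q.2 (val j)).

Lemma lam_sq P Q : lam P Q ^+ 2 = 1.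
Proof. by rewrite /lam /lamI !exprMn !sgn_sq !mulr1. Qed.

Lemma pauli_comm P Q :
  mulo (pauli_op R P) (pauli_op R Q) = scaleo (lam P Q) (mulo (pauli_op R Q) (pauli_op R P)).
Proof.
rewrite !pauli_split; apply: tens_comm; rewrite ?pauliR_str ?pauliS_str.
  exact: Pstr_comm.
apply: scale_comm; exact: Pstr_comm.
Qed.
End Pauli.

Section Main.
Variables (n d : nat) (R : {set 'I_n}) (U : grp d -> pauli n) (e : vect (confR R)).
Hypothesis hrep : forall g h,
  pauli_op R (U (gmul g h)) = mulo (pauli_op R (U g)) (pauli_op R (U h)).
Hypothesis hon : forall g h, dotv (orient R U e g) (orient R U e h) = (g == h)%:R.
Hypothesis hc : #|confR R| = #|grp d|.

Local Notation W g := (pauli_op R (U g)).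
Local Notation o g := (orient R U e g).
Local Notation B g := (pauliS R (U g)).
Local Notation A g := (pauliR R (U g)).
Definition g0 : grp d := [ffun => false].
Definition x0 : kin R := ([ffun => false], [ffun => false]).
Definition N : algC := #|{: grp d}|%:R.
Definition s : algC := sqrtC N.

Lemma N_neq0 : N != 0.
Proof. by rewrite /N pnatr_eq0 -lt0n; apply/card_gt0P; exists g0. Qed.
Lemma s_neq0 : s != 0.
Proof. by rewrite /s sqrtC_eq0 N_neq0. Qed.
Lemma s_conj : s^* = s.
Proof. by rewrite geC0_conj // sqrtC_ge0 ler0n. Qed.
Lemma s_sq : s * s = N.
Proof. by rewrite -expr2 sqrtCK. Qed.

Lemma gmulgg g : gmul g g = g0.
Proof. by apply/ffunP=> i; rewrite !ffunE addbb. Qed.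

Lemma W0 : W g0 = ido (kin R).
Proof.
have H := hrep g0 g0; rewrite gmulgg in H.
have Hu := pauli_unitary R (U g0).
transitivity (mulo (mulo (adjo (W g0)) (W g0)) (W g0)); first by rewrite Hu mul1o.
by rewrite muloA -H.
Qed.

Lemma WW g : mulo (W g) (W g) = ido (kin R).
Proof. by rewrite -hrep gmulgg W0. Qed.

Lemma adjW g : adjo (W g) = W g.
Proof.
by rewrite -[adjo (W g)]mulo1 -(WW g) -muloA (pauli_unitary R (U g)) mul1o.
Qed.

Section Err.
Variable P : pauli n.
Definition chi (h : grp d) : algC := lam R (U h) P.
Local Notation Ep := (pauli_op R P).

Lemma W_comm h : mulo (W h) Ep = scaleo (chi h) (mulo Ep (W h)).
Proof. exact: pauli_comm. Qed.

Lemma chi_sq h : chi h * chi h = 1.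
Proof. by rewrite -expr2 lam_sq. Qed.

Lemma chi_conj h : (chi h)^* = chi h.
Proof.
rewrite /chi /lam /lamI /sgnS !rmorphM /= !rmorph_prod /=.
by congr (_ * _ * (_ * _)); apply: eq_bigr => j _; rewrite rmorphXn /= rmorphN1.
Qed.

Lemma chi_mul g h : chi (gmul g h) = chi g * chi h.
Proof.
apply: (@scaleo_inj _ x0 (mulo Ep (W (gmul g h)))).
  by apply: unitary_mulo; apply: pauli_unitary.
rewrite -W_comm hrep muloA W_comm mulo_scaler -!muloA W_comm mulo_scalel.
by rewrite scaleoA !muloA -hrep mulrC.
Qed.
End Err.


Lemma sum_delta (T : finType) (a : T) (F : T -> algC) : \sum_h (a == h)%:R * F h = F a.
Proof.
rewrite (bigD1 a) //= eqxx mul1r big1 ?addr0 // => h Hh.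
by rewrite eq_sym (negbTE Hh) mul0r.
Qed.

Lemma sum_delta1 (T : finType) (a : T) : \sum_h (a == h)%:R = 1 :> algC.
Proof. by rewrite -[RHS](sum_delta a (fun _ => 1)); apply: eq_bigr => h _; rewrite mulr1. Qed.

Lemma sum_fact2 (X Y : finType) (c : algC) (f : X -> algC) (g : Y -> algC) :
  \sum_a \sum_b (c * f a * g b) = c * (\sum_a f a) * (\sum_b g b).
Proof.
symmetry; rewrite big_distrr /= [RHS]exchange_big /=; apply: eq_bigr => b _.
by rewrite big_distrr big_distrl.
Qed.

Lemma oneRE x : oneR R U e x = s^-1 * \sum_g o g x.
Proof. by rewrite /oneR; exact: ffunE. Qed.

Lemma dot_o_one g : dotv (o g) (oneR R U e) = s^-1.
Proof.
transitivity (s^-1 * \sum_h dotv (o g) (o h)); last first.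
  by under eq_bigr do rewrite hon; rewrite sum_delta1 mulr1.
rewrite /dotv big_distrr /=; under [RHS]eq_bigr do rewrite big_distrr /=.
rewrite [RHS]exchange_big /=; apply: eq_bigr => x _.
rewrite oneRE mulrCA !big_distrr /=; apply: eq_bigr => h _; ring.
Qed.

Lemma dot_one_one : dotv (oneR R U e) (oneR R U e) = 1.
Proof.
transitivity (s^-1 * \sum_g dotv (o g) (oneR R U e)).
  rewrite /dotv big_distrr /=; under [RHS]eq_bigr do rewrite big_distrr /=.
  rewrite [RHS]exchange_big /=; apply: eq_bigr => x _.
  rewrite {1}oneRE rmorphM /= rmorph_sum -mulrA big_distrl big_distrr /=.
  by apply: eq_bigr => h _; rewrite fmorphV /= s_conj.
under eq_bigr do rewrite dot_o_one.
rewrite sumr_const -mulr_natr; change (s^-1 * (s^-1 * N) = 1); rewrite -s_sq.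
by field; exact: s_neq0.
Qed.


Lemma app_scalev (T : finType) (X : oper T) c (v : vect T) :
  app X [ffun y => c * v y] = [ffun y => c * app X v y].
Proof.
apply/ffunP=> y; rewrite !ffunE big_distrr; apply: eq_bigr => x _ /=.
by rewrite ffunE mulrCA.
Qed.

Lemma app_scaleo (T : finType) (X : oper T) c (v : vect T) :
  app (scaleo c X) v = [ffun y => c * app X v y].
Proof.
apply/ffunP=> y; rewrite !ffunE big_distrr; apply: eq_bigr => x _ /=.
by rewrite ffunE mulrA.
Qed.

Lemma app_sum (T : finType) (X : oper T) (v : grp d -> vect T) :
  app X (\sum_g v g) = \sum_g app X (v g).
Proof.
apply/ffunP=> y; rewrite !ffunE sum_ffunE.
under eq_bigr do rewrite sum_ffunE big_distrr /=.
rewrite exchange_big /=; apply: eq_bigr => g _; by rewrite ffunE.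
Qed.

Lemma app_sumo (T : finType) (X : grp d -> oper T) (v : vect T) :
  app (\sum_g X g) v = \sum_g app (X g) v.
Proof.
apply/ffunP=> y; rewrite !ffunE sum_ffunE.
under eq_bigr do rewrite sum_ffunE big_distrl /=.
rewrite exchange_big /=; apply: eq_bigr => g _; by rewrite ffunE.
Qed.

Definition pe (v : vect (kin R)) : vect (confS R) :=
  [ffun t => \sum_r (e r)^* * v (r, t)].

Lemma pe_scale c (v : vect (kin R)) : pe [ffun y => c * v y] = [ffun t : confS R => c * pe v t].
Proof.
apply/ffunP=> t; rewrite !ffunE big_distrr; apply: eq_bigr => r _ /=.
by rewrite ffunE mulrCA.
Qed.

Definition red (X : oper (kin R)) : oper (confS R) :=
  [ffun q : confS R * confS R =>
     \sum_r \sum_r' (e r)^* * X ((r, q.1), (r', q.2)) * e r'].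

Lemma app_red X psi : app (red X) psi = pe (app X (tensv e psi)).
Proof.
apply/ffunP=> t; rewrite !ffunE.
under [RHS]eq_bigr do rewrite ffunE sum_pair.
transitivity (\sum_r \sum_r' \sum_b (e r)^* * X ((r, t), (r', b)) * e r' * psi b).
  transitivity (\sum_b \sum_r \sum_r' (e r)^* * X ((r, t), (r', b)) * e r' * psi b).
    apply: eq_bigr => b _; rewrite ffunE big_distrl /=; apply: eq_bigr => r _.
    by rewrite big_distrl.
  rewrite exchange_big /=; apply: eq_bigr => r _; by rewrite exchange_big.
apply: eq_bigr => r _; rewrite big_distrr /=; apply: eq_bigr => r' _.
rewrite big_distrr /=; apply: eq_bigr => b _.
by rewrite ffunE /=; ring.
Qed.

Lemma orientE g x : o g x = \sum_r A g (x, r) * e r.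
Proof. by rewrite /orient ffunE. Qed.

Lemma TRE p : TR R U e p = \sum_g o g p.1.1 * (o g p.2.1)^* * (B g (p.2.2, p.1.2))^*.
Proof.
rewrite /TR ffunE; apply: eq_bigr => g _.
by rewrite /tenso /outer /adjo !ffunE.
Qed.

Lemma WE g p : W g p = A g (p.1.1, p.2.1) * B g (p.1.2, p.2.2).
Proof. by rewrite pauli_split ffunE. Qed.

Lemma M1 psi : app (adjo (TR R U e)) (tensv (oneR R U e) psi) =
  [ffun y => s^-1 * (\sum_g app (W g) (tensv e psi)) y].
Proof.
apply/ffunP=> [[y1 y2]].
transitivity (\sum_g o g y1 * s^-1 * app (B g) psi y2); last first.
  rewrite ffunE sum_ffunE big_distrr /=; apply: eq_bigr => g _.
  rewrite pauli_split app_tens [tensv _ _ _]ffunE /=; rewrite -/(orient R U e g); ring.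
rewrite [LHS]ffunE.
under eq_bigr => x _ do rewrite [adjo _ _]ffunE /= TRE rmorph_sum big_distrl /=.
rewrite exchange_big /=; apply: eq_bigr => g _; rewrite sum_pair.
transitivity (\sum_x1 \sum_x2 (o g y1) * ((o g x1)^* * oneR R U e x1) * (B g (y2, x2) * psi x2)).
  apply: eq_bigr => x1 _; apply: eq_bigr => x2 _.
  rewrite [tensv _ _ _]ffunE /= !rmorphM /= !conjCK; ring.
rewrite sum_fact2 -/(dotv (o g) (oneR R U e)) dot_o_one.
by rewrite [app (B g) psi y2]ffunE.
Qed.

Lemma appE (T : finType) (X : oper T) v y : app X v y = \sum_x X (y, x) * v x.
Proof. by rewrite ffunE. Qed.

Lemma muloE (T : finType) (X Y : oper T) p : mulo X Y p = \sum_z X (p.1, z) * Y (z, p.2).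
Proof. by rewrite ffunE. Qed.
Lemma adjoE (T : finType) (X : oper T) p : adjo X p = (X (p.2, p.1))^*.
Proof. by rewrite ffunE. Qed.
Lemma idoE (T : finType) p : ido T p = (p.1 == p.2)%:R.
Proof. by rewrite ffunE. Qed.

Lemma M3 (v : vect (kin R)) :
  app (TR R U e) v = \sum_h tensv (o h) (pe (app (adjo (W h)) v)).
Proof.
apply/ffunP=> [[y1 y2]]; rewrite sum_ffunE [LHS]ffunE.
transitivity (\sum_h \sum_x \sum_r
   o h y1 * ((A h (x.1, r))^* * (e r)^*) * (B h (x.2, y2))^* * v x).
  under eq_bigr => x _ do rewrite TRE big_distrl /=.
  rewrite exchange_big /=; apply: eq_bigr => h _; apply: eq_bigr => x _.
  rewrite (orientE h x.1) rmorph_sum big_distrr big_distrl big_distrl /=.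
  by apply: eq_bigr => r _; rewrite rmorphM.
apply: eq_bigr => h _; rewrite [tensv _ _ _]ffunE [pe _ _]ffunE /= big_distrr /=.
under [RHS]eq_bigr => r _ do rewrite (appE (adjo (W h))) big_distrr /= big_distrr /=.
rewrite [RHS]exchange_big /=; apply: eq_bigr => x _; apply: eq_bigr => r _.
by rewrite [adjo _ _]ffunE /= WE /= rmorphM; ring.
Qed.

Lemma app_W_M h (Phi : vect (kin R)) :
  app (W h) (\sum_g app (W g) Phi) = \sum_g app (W g) Phi.
Proof.
rewrite app_sum; under eq_bigr do rewrite -app_mulo -hrep.
rewrite (reindex (gmul h)) /=; last first.
  exists (gmul h) => g _; apply/ffunP=> i; by rewrite !ffunE addKb.
by apply: eq_bigr => g _; congr (app (W _) _); apply/ffunP=> i; rewrite !ffunE addKb.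
Qed.

Definition wv (P : pauli n) : vect (confR R) :=
  [ffun r => s^-1 * \sum_h chi P h * o h r].
Definition Lop (P : pauli n) : oper (confS R) :=
  red (mulo (pauli_op R P) (\sum_k W k)).

Lemma main_id (P : pauli n) psi :
  app (TR R U e) (app (pauli_op R P) (app (adjo (TR R U e)) (tensv (oneR R U e) psi)))
  = tensv (wv P) (app (Lop P) psi).
Proof.
set M := \sum_g app (W g) (tensv e psi).
rewrite M1 app_scalev M3.
have H h : pe (app (adjo (W h)) [ffun y => s^-1 * app (pauli_op R P) M y]) =
           [ffun t => s^-1 * chi P h * pe (app (pauli_op R P) M) t].
  rewrite adjW app_scalev -app_mulo W_comm app_scaleo app_mulo app_W_M.
  rewrite -/M pe_scale pe_scale; apply/ffunP=> t; rewrite !ffunE; ring.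
under eq_bigr do rewrite H.
apply/ffunP=> [[r t]]; rewrite sum_ffunE [RHS]ffunE /=.
rewrite app_red app_mulo app_sumo -/M.
rewrite [wv P r]ffunE big_distrr /= mulrC big_distrr /=.
apply: eq_bigr => h _; rewrite !ffunE /=; ring.
Qed.

Lemma completeR a b : \sum_g (o g a)^* * o g b = (a == b)%:R.
Proof. exact: complete. Qed.

Lemma TR_coiso : mulo (TR R U e) (adjo (TR R U e)) = ido (kin R).
Proof.
apply/ffunP=> [[[x1 x2] [y1 y2]]]; rewrite [LHS]ffunE /=.
transitivity (\sum_g \sum_h \sum_z1 \sum_z2
  (o g x1 * (o h y1)^*) * ((o g z1)^* * o h z1) * ((B g (z2, x2))^* * B h (z2, y2))).
  rewrite sum_pair.
  under eq_bigr => z1 _ do under eq_bigr => z2 _ do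
    rewrite [adjo _ _]ffunE /= !TRE rmorph_sum big_distrl /=.
  transitivity (\sum_z1 \sum_g \sum_h \sum_z2
    (o g x1 * (o h y1)^*) * ((o g z1)^* * o h z1) * ((B g (z2, x2))^* * B h (z2, y2))).
    apply: eq_bigr => z1 _; rewrite exchange_big; apply: eq_bigr => g _ /=.
    under eq_bigr do rewrite big_distrr /=.
    rewrite exchange_big; apply: eq_bigr => h _ /=; apply: eq_bigr => z2 _.
    by rewrite !rmorphM /= !conjCK; ring.
  rewrite exchange_big; apply: eq_bigr => g _; rewrite exchange_big.
  by apply: eq_bigr => h _.
transitivity (\sum_g o g x1 * (o g y1)^* * (x2 == y2)%:R).
  apply: eq_bigr => g _.
  transitivity (\sum_h (g == h)%:R * (o g x1 * (o h y1)^* * mulo (adjo (B g)) (B h) (x2, y2))).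
    apply: eq_bigr => h _; rewrite sum_fact2 -/(dotv (o g) (o h)) hon.
    have -> : \sum_b (B g (b, x2))^* * B h (b, y2) = mulo (adjo (B g)) (B h) (x2, y2).
      by rewrite muloE; apply: eq_bigr => z2 _; rewrite adjoE.
    ring.
  by rewrite sum_delta (pauliS_unitary R (U g)) idoE.
rewrite -big_distrl /=.
have -> : \sum_g o g x1 * (o g y1)^* = ((x1 == y1)%:R)^*.
  by rewrite -completeR rmorph_sum; apply: eq_bigr => g _; rewrite /= rmorphM /= conjCK mulrC.
rewrite conjC_nat idoE /= xpair_eqE.
by case: (x1 == y1); case: (x2 == y2); rewrite ?mulr1 ?mul0r ?mulr0.
Qed.

Lemma TR_unitary : unitary (TR R U e).
Proof. exact: mulo_sym TR_coiso. Qed.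

Lemma TRadj_unitary : unitary (adjo (TR R U e)).
Proof. by rewrite /unitary adjoK TR_coiso. Qed.

Lemma prod_sums (c c' : algC) (a b : grp d -> algC) :
  (c * \sum_h a h) * (c' * \sum_h b h) = \sum_h \sum_h' c * c' * (a h * b h').
Proof.
transitivity (c * c' * ((\sum_h a h) * (\sum_h b h))); first by ring.
rewrite big_distrl /= big_distrr /=; apply: eq_bigr => h _.
rewrite big_distrr /= big_distrr /=; apply: eq_bigr => h' _; ring.
Qed.

Lemma dot_wv P Q : dotv (wv P) (wv Q) = s^-1 * s^-1 * \sum_h chi P h * chi Q h.
Proof.
transitivity (\sum_h \sum_h' s^-1 * s^-1 * (chi P h * chi Q h') * dotv (o h) (o h')).
  rewrite /dotv.
  under [RHS]eq_bigr => h _ do under eq_bigr => h' _ do rewrite big_distrr /=.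
  under [RHS]eq_bigr => h _ do rewrite exchange_big /=.
  rewrite [RHS]exchange_big /=; apply: eq_bigr => r _.
  rewrite !ffunE rmorphM /= rmorph_sum fmorphV /= s_conj prod_sums.
  apply: eq_bigr => h _; apply: eq_bigr => h' _.
  by rewrite rmorphM /= chi_conj; ring.
rewrite big_distrr /=; apply: eq_bigr => h _.
under eq_bigr do rewrite hon.
transitivity (\sum_h' (h == h')%:R * (s^-1 * s^-1 * (chi P h * chi Q h'))).
  by apply: eq_bigr => h' _; rewrite mulrC.
by rewrite sum_delta mulrA.
Qed.

Lemma wv_norm P : dotv (wv P) (wv P) = 1.
Proof.
rewrite dot_wv; under eq_bigr do rewrite chi_sq.
rewrite sumr_const -mulr_natr; change (s^-1 * s^-1 * (1 * N) = 1); rewrite -s_sq.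
by field; exact: s_neq0.
Qed.

Lemma wv_orth P Q : wv P = wv Q \/ dotv (wv P) (wv Q) = 0.
Proof.
case: (boolP [forall h, chi P h == chi Q h]) => [/forallP H | /forallPn [h0 Hh0]].
  left; apply/ffunP=> r; rewrite !ffunE; congr (_ * _); apply: eq_bigr => h _.
  by rewrite (eqP (H h)).
right; rewrite dot_wv.
pose psi h := chi P h * chi Q h.
have psimul g h : psi (gmul g h) = psi g * psi h by rewrite /psi !chi_mul; ring.
have psi0 : psi h0 = -1.
  have Hsq : psi h0 * psi h0 = 1.
    transitivity ((chi P h0 * chi P h0) * (chi Q h0 * chi Q h0)); first by rewrite /psi; ring.
    by rewrite !chi_sq mulr1.
  have Hn1 : psi h0 != 1.
    apply: contra Hh0 => /eqP H1; apply/eqP.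
    transitivity (psi h0 * chi Q h0); last by rewrite H1 mul1r.
    by rewrite /psi -mulrA chi_sq mulr1.
  have : (psi h0 - 1) * (psi h0 + 1) = 0.
    transitivity (psi h0 * psi h0 - 1); first by ring.
    by rewrite Hsq subrr.
  move/eqP; rewrite mulf_eq0 subr_eq0 (negbTE Hn1) /= addr_eq0 => /eqP //.
have : \sum_h psi h = - \sum_h psi h.
  rewrite {1}(reindex (gmul h0)) /=; last first.
    by exists (gmul h0) => g _; apply/ffunP=> i; rewrite !ffunE addKb.
  under eq_bigr do rewrite psimul psi0 mulN1r.
  by rewrite sumrN.
move=> HS; have : 2%:R * \sum_h psi h = 0.
  by rewrite mulr2n mulrDl mul1r {2}HS subrr.
move/eqP; rewrite mulf_eq0 pnatr_eq0 /= => /eqP H0.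
by rewrite (_ : \sum_h chi P h * chi Q h = \sum_h psi h) // H0 mulr0.
Qed.

Lemma dot_L P psi phi : dotv (app (Lop P) psi) (app (Lop P) phi) = dotv psi phi.
Proof.
transitivity (dotv (tensv (wv P) (app (Lop P) psi)) (tensv (wv P) (app (Lop P) phi))).
  by rewrite dotv_tens wv_norm mul1r.
rewrite -!main_id (dotv_unitary _ _ TR_unitary) (dotv_unitary _ _ (pauli_unitary R P)).
by rewrite (dotv_unitary _ _ TRadj_unitary) dotv_tens dot_one_one mul1r.
Qed.

Lemma Lop_unitary P : unitary (Lop P).
Proof.
pose delta (c : confS R) : vect (confS R) := [ffun t => (t == c)%:R].
have dE c t : delta c t = (t == c)%:R by rewrite /delta ffunE.
have Hcol c : app (Lop P) (delta c) = [ffun z => Lop P (z, c)].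
  apply/ffunP=> z; rewrite appE [RHS]ffunE.
  transitivity (\sum_y (c == y)%:R * Lop P (z, y)); last by rewrite sum_delta.
  by apply: eq_bigr => y _; rewrite dE eq_sym mulrC.
apply/ffunP=> [[a b]]; rewrite muloE idoE /=.
transitivity (dotv (app (Lop P) (delta a)) (app (Lop P) (delta b))).
  by rewrite !Hcol /dotv; apply: eq_bigr => z _; rewrite adjoE /= ![[ffun z => _] _]ffunE.
rewrite dot_L /dotv.
transitivity (\sum_t (a == t)%:R * (t == b)%:R :> algC).
  by apply: eq_bigr => t _; rewrite !dE conjC_nat eq_sym.
by rewrite sum_delta.
Qed.
End Main.


Theorem mainTheorem9
  (n k : nat) (hkn : (k <= n)%N)
  (R : {set 'I_n}) (hR : #|R| = (n - k)%N)
  (U : grp (n - k) -> pauli n)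
  (hU : pauli_stab_rep R U)
  (hUR : injective (fun g => pauliR R (U g)))
  (hUS : exists g, pauliS R (U g) <> ido (confS R))
  (e : vect (confR R))
  (hideal : forall g h, dotv (orient R U e g) (orient R U e h) = (g == h)%:R)
  (m : nat) (E : 'I_m -> pauli n) (hE : correctable R U E) :
  exists (w : 'I_m -> vect (confR R)) (L : 'I_m -> oper (confS R)),
    [/\ forall i, dotv (w i) (w i) = 1,
        forall i j, w i = w j \/ dotv (w i) (w j) = 0,
        forall i, unitary (L i) &
        forall (i : 'I_m) (psi : vect (confS R)),
          app (TR R U e)
            (app (pauli_op R (E i))
               (app (adjo (TR R U e)) (tensv (oneR R U e) psi)))
          = tensv (w i) (app (L i) psi)].
Proof.
case: hU => hrep _ _.
have hc : #|confR R| = #|grp (n - k)|.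
  by rewrite !card_ffun card_sig card_ord card_bool -hR; congr (_ ^ _)%N; apply: eq_card.
exists (fun i => wv U e (E i)), (fun i => Lop U e (E i)); split.
- by move=> i; exact: wv_norm hideal (E i).
- by move=> i j; exact: wv_orth hrep hideal (E i) (E j).
- by move=> i; exact: Lop_unitary hrep hideal hc (E i).
- by move=> i psi; exact: main_id hrep hideal (E i) psi.
Qed.
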